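(* Let $A,C$ be logically independent events. (a) If $P(C)=1$, $P(C|A)=1$ and $P(C|\bar A)<1$ in a coherent assessment, then $P(A)=1$. (b) The family $\{C, C|A\}$ does not p-entail $A$, and the iterated conditional $A\,|\,(C\wedge(C|A))$, defined as $A\wedge C\wedge(C|A)+\mu(1-C\wedge(C|A))$ with $\mu$ its prevision, is not identically equal to $1$: if $P(C|A)=1$, every $\mu\in[0,1]$ is coherent and the iterated conditional takes value $1$ on $AC$, $0$ on $\bar AC$, and $\mu$ on $\bar C$. *)

(* Defs.v *)
(* Coherence in the sense of de Finetti / Gilio (betting scheme)
   for finite families of conditional random quantities over a finite sample
   space Omega; conditional events are the special case of indicators. *)
From HB Require Import structures.
From mathcomp Require Import all_boot all_order all_algebra.
Set Implicit Arguments. Unset Strict Implicit. Unset Printing Implicit Defensive.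
Import Order.TTheory GRing.Theory Num.Theory.
Local Open Scope ring_scope.

Section Coherence.
Variables (R : realFieldType) (Omega : finType).

Definition ind (E : {set Omega}) (w : Omega) : R := (w \in E)%:R.

(* an assessed conditional random quantity X|H with prevision m : (X, H, m) *)
Definition cq := ((Omega -> R) * {set Omega} * R)%type.
Definition cq0 : cq := (fun _ => 0, set0, 0).

Definition cqX (F : seq cq) (i : nat) := (nth cq0 F i).1.1.
Definition cqH (F : seq cq) (i : nat) := (nth cq0 F i).1.2.
Definition cqP (F : seq cq) (i : nat) := (nth cq0 F i).2.

Definition gain (F : seq cq) (s : 'I_(size F) -> R) (w : Omega) : R :=
  \sum_(i < size F) s i * ind (cqH F i) w * (cqX F i w - cqP F i).

Definition coherent (F : seq cq) : Prop :=
  forall s : 'I_(size F) -> R, (exists i, s i != 0) ->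
    exists w, (exists2 i, s i != 0 & w \in cqH F i) /\ 0 <= gain s w.

Definition cev (E H : {set Omega}) (p : R) : cq := (ind E, H, p).
Definition uev (E : {set Omega}) (p : R) : cq := cev E setT p.

Definition logically_independent (A C : {set Omega}) : Prop :=
  [/\ A :&: C != set0, A :&: ~: C != set0, ~: A :&: C != set0
    & ~: A :&: ~: C != set0].

Definition p_consistent (F : seq ({set Omega} * {set Omega})) : Prop :=
  coherent [seq cev eh.1 eh.2 1 | eh <- F].

Definition p_entails (F : seq ({set Omega} * {set Omega}))
    (E H : {set Omega}) : Prop :=
  forall z : R, coherent ([seq cev eh.1 eh.2 1 | eh <- F] ++ [:: cev E H z]) ->
    z = 1.

(* Gilio-Sanfilippo conjunction of an (unconditional) event E with the
   conditional event E2|H2, where y = P(E2|H2):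
   1 on E E2 H2, 0 on (not E) or (not E2) H2, y on E (not H2). *)
Definition conjE (E E2 H2 : {set Omega}) (y : R) (w : Omega) : R :=
  if w \in E then (if w \in H2 then ind E2 w else y) else 0.

(* iterated conditional A | (C /\ (C|A)) := A /\ C /\ (C|A) + mu (1 - C /\ (C|A)),
   with y = P(C|A) and mu its prevision *)
Definition iterA_CCA (A C : {set Omega}) (y mu : R) (w : Omega) : R :=
  conjE (A :&: C) C A y w + mu * (1 - conjE C C A y w).

End Coherence.

(* Main.v *)
Require Import Defs.
From HB Require Import structures.
From mathcomp Require Import all_boot all_order all_algebra.
From mathcomp Require Import ring lra.
Import Order.TTheory GRing.Theory Num.Theory.
Local Open Scope ring_scope.
Lemma partA (R : realFieldType) (Omega : finType) (A C : {set Omega}) (x z : R) :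
  z < 1 -> coherent [:: uev C 1; cev C A 1; cev C (~: A) z; uev A x] -> x = 1.
Proof.
move=> hz H; apply/eqP; rewrite -subr_eq0; apply/negP => /negP hx.
have hz' : 1 - z != 0 by rewrite subr_eq0 eq_sym lt_eqF.
pose s3 := ((x - 1) * x - 1) / (1 - z).
have hs3 : s3 * (1 - z) = (x - 1) * x - 1 by rewrite /s3 divfK.
clearbody s3.
pose s1 : R := `|s3 * z| + `|(x - 1) * x| + 2.
have e1 : s1 = `|s3 * z| + `|(x - 1) * x| + 2 by [].
have n1 : s3 * z <= `|s3 * z| by apply: ler_norm.
have n2 : - (s3 * z) <= `|s3 * z| by rewrite -normrN ler_norm.
have n3 : (x - 1) * x <= `|(x - 1) * x| by apply: ler_norm.
have n4 : - ((x - 1) * x) <= `|(x - 1) * x| by rewrite -normrN ler_norm.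
have n5 : 0 <= `|s3 * z| by [].
have n6 : 0 <= `|(x - 1) * x| by [].
have hs1 : s1 != 0 by rewrite e1 gt_eqF // ltr_wpDl // addr_ge0.
clearbody s1.
have sq : 0 < (x - 1) * (x - 1) by rewrite -expr2 exprn_even_gt0.
have [w [_ hg]] := H (fun i => match nat_of_ord i with 0 => s1 | 1 => 0 | 2 => s3 | _ => x - 1 end)
  (ex_intro _ ord0 hs1).
move: hg; rewrite /gain !big_ord_recl big_ord0 addr0 /cqH /cqX /cqP /= /ind !inE /=.
case: (w \in A); case: (w \in C) => /=; rewrite ?mulr1 ?mulr0 ?mul0r ?add0r ?addr0 ?subrr.
all: nra.
Qed.
Lemma ord2P (i : 'I_2) : i = ord0 \/ i = lift ord0 ord0.
Proof. case: i => [[|[|n]] Hi]; [left|right|by []]; exact/val_inj. Qed.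
Lemma ord3P (i : 'I_3) : [\/ i = ord0, i = lift ord0 ord0 | i = lift ord0 (lift ord0 ord0)].
Proof. case: i => [[|[|[|n]]] Hi]; [apply: Or31|apply: Or32|apply: Or33|by []]; exact/val_inj. Qed.

Lemma partB1 (R : realFieldType) (Omega : finType) (A C : {set Omega}) :
  logically_independent A C -> p_consistent R [:: (C, setT); (C, A)].
Proof.
case=> /set0Pn [w hw] _ _ _ s [i hi]; exists w; split.
  exists i => //; move: hw; rewrite !inE => /andP [hA hC].
  by case: (ord2P i) => ->; rewrite /cqH /= ?inE.
move: hw; rewrite !inE => /andP [hA hC].
rewrite /gain !big_ord_recl big_ord0 /cqH /cqX /cqP /= /ind !inE hA hC /=.
by rewrite !subrr !mulr0 !addr0.
Qed.

Lemma partB2 (R : realFieldType) (Omega : finType) (A C : {set Omega}) :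
  logically_independent A C -> ~ p_entails R [:: (C, setT); (C, A)] A setT.
Proof.
case=> /set0Pn [w1 hw1] _ /set0Pn [w2 hw2] _ H.
suff: (0:R) = 1 by move/eqP; rewrite eq_sym oner_eq0.
apply: H => s [i hi].
move: hw1 hw2; rewrite !inE => /andP [hA1 hC1] /andP [hA2 hC2].
have [h|h] := boolP ((s ord0 != 0) || (s (lift ord0 (lift ord0 ord0)) != 0)).
  exists w2; split.
    case/orP: h => h; [exists ord0|exists (lift ord0 (lift ord0 ord0))] => //;
      by rewrite /cqH /= inE.
  rewrite /gain !big_ord_recl big_ord0 /cqH /cqX /cqP /= /ind !inE (negbTE hA2) hC2 /=.
  rewrite ?subrr ?mulr0 ?mul0r ?addr0 ?add0r ?subr0 ?mulr0 => //.
move: h; rewrite negb_or !negbK => /andP [/eqP h0 /eqP h2].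
exists w1; split.
  exists i => //; case: i hi => [[|[|[|n]]] Hi] hi; rewrite /cqH /= ?inE //.
rewrite /gain !big_ord_recl big_ord0 /cqH /cqX /cqP /= /ind !inE hA1 hC1 /=.
by rewrite h0 h2 !subrr !mulr0 !mul0r !addr0.
Qed.
Lemma iterE (R : realFieldType) (Omega : finType) (A C : {set Omega}) (mu : R) w :
  iterA_CCA A C 1 mu w =
  if w \in C then (if w \in A then 1 else 0) else mu.
Proof.
rewrite /iterA_CCA /conjE /ind !inE.
by case: (w \in A); case: (w \in C) => /=; rewrite ?subrr ?mulr0 ?addr0 ?add0r ?subr0 ?mulr1.
Qed.

Lemma partC (R : realFieldType) (Omega : finType) (A C : {set Omega}) (p mu : R) :
  logically_independent A C -> 0 <= p <= 1 -> 0 <= mu <= 1 ->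
     coherent [:: uev C p; cev C A 1;
                  ((iterA_CCA A C 1 mu : Omega -> R), setT, mu)].
Proof.
case=> /set0Pn [w1 hw1] _ /set0Pn [w2 hw2] /set0Pn [w3 hw3] /andP [p0 p1] /andP [m0 m1] s [i hi].
move: hw1 hw2 hw3; rewrite !inE => /andP [hA1 hC1] /andP [hA2 hC2] /andP [hA3 hC3].
have gE : forall w, gain s w = s ord0 * (ind R C w - p) +
   s (lift ord0 ord0) * ind R A w * (ind R C w - 1) +
   s (lift ord0 (lift ord0 ord0)) * (iterA_CCA A C 1 mu w - mu).
  by move=> w; rewrite /gain !big_ord_recl big_ord0 /cqH /cqX /cqP /= /ind !in_setT /= !mulr1 addr0 addrA.
have [h|h] := boolP ((s ord0 != 0) || (s (lift ord0 (lift ord0 ord0)) != 0)).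
  have wit : forall w, exists2 i, s i != 0 & w \in cqH (R:=R) [:: uev C p; cev C A 1;
                  ((iterA_CCA A C 1 mu : Omega -> R), setT, mu)] i.
    by move=> v; case/orP: h => h; [exists ord0|exists (lift ord0 (lift ord0 ord0))] => //;
      rewrite /cqH /= inE.
  have g1 := gE w1; have g2 := gE w2; have g3 := gE w3.
  rewrite !iterE /ind ?inE hA1 hC1 in g1.
  rewrite !iterE /ind ?inE (negbTE hA2) hC2 in g2.
  rewrite !iterE /ind ?inE (negbTE hA3) (negbTE hC3) in g3.
  move: g1 g2 g3 => /= g1 g2 g3.
  have [k1|k1] := lerP 0 (gain s w1); first by exists w1.
  have [k2|k2] := lerP 0 (gain s w2); first by exists w2.
  exists w3; split => //.
  rewrite g3; rewrite g1 in k1; rewrite g2 in k2.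
  move: k1 k2; rewrite !mulr1 !mulr0 !mul0r !subrr !mulr0 !addr0 !sub0r.
  move: (s ord0) (s (lift ord0 (lift ord0 ord0))) => a c k1 k2.
  have e1 : 0 <= mu * p by rewrite mulr_ge0.
  have e2 : 0 <= p * (1 - mu) by rewrite mulr_ge0 // subr_ge0.
  have hk : a * p * (1 - p) <= 0.
    have : (mu * p) * (a * (1 - p) + c * (1 - mu)) + (p * (1 - mu)) * (a * (1 - p) + c * - mu) <= 0.
      by rewrite -oppr_ge0 opprD; apply: addr_ge0; rewrite -mulrN mulr_ge0 // oppr_ge0 ltW.
    suff -> : (mu * p) * (a * (1 - p) + c * (1 - mu)) + (p * (1 - mu)) * (a * (1 - p) + c * - mu) = a * p * (1 - p) by [].
    ring.
  have [hp|hp] := ltrP p 1; first nra.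
  have -> : p = 1 by apply/le_anti; rewrite p1 hp.
  move: k1 k2; have -> : p = 1 by apply/le_anti; rewrite p1 hp.
  rewrite !subrr !mulr0 !add0r => k1 k2.
  have [hm|hm] := ltrP mu 1; first nra.
  have em : mu = 1 by apply/le_anti; rewrite m1 hm.
  by move: k1; rewrite em subrr mulr0 ltxx.
move: h; rewrite negb_or !negbK => /andP [/eqP h0 /eqP h2].
exists w1; split.
  exists i => //; case: i hi => [[|[|[|n]]] Hi] hi; rewrite /cqH /= ?inE //.
rewrite gE /ind ?inE hA1 hC1 /= h0 h2.
by rewrite !mul0r subrr !mulr0 !addr0.
Qed.

Theorem mainTheorem13 (R : realFieldType) (Omega : finType)
    (A C : {set Omega}) :
  logically_independent A C ->
  (* (a) *)
  (forall x z : R, z < 1 ->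
     coherent [:: uev C 1; cev C A 1; cev C (~: A) z; uev A x] -> x = 1) /\
  (* (b) {C, C|A} is p-consistent but does not p-entail A *)
  (p_consistent R [:: (C, setT); (C, A)] /\
   ~ p_entails R [:: (C, setT); (C, A)] A setT) /\
  (* (b) with P(C|A) = 1, every mu in [0,1] is coherent for A|(C /\ (C|A)),
     whose values are 1 on AC, 0 on (not A)C, mu on (not C), so it is not
     identically 1 *)
  (forall p mu : R, 0 <= p <= 1 -> 0 <= mu <= 1 ->
     coherent [:: uev C p; cev C A 1;
                  ((iterA_CCA A C 1 mu : Omega -> R), setT, mu)] /\
     (forall w, w \in A :&: C -> iterA_CCA A C 1 mu w = 1) /\
     (forall w, w \in ~: A :&: C -> iterA_CCA A C 1 mu w = 0) /\
     (forall w, w \in ~: C -> iterA_CCA A C 1 mu w = mu) /\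
     (exists w, iterA_CCA A C 1 mu w != 1)).
Proof.
move=> hli; split; first by move=> x z; exact: partA.
split; first by split; [exact: partB1|exact: partB2].
move=> p mu hp hm; split; first exact: partC.
have hli' := hli; case: hli' => _ _ /set0Pn [w2 hw2] _.
split; first by move=> w; rewrite !inE iterE => /andP [-> ->].
split; first by move=> w; rewrite !inE iterE => /andP [/negbTE -> ->].
split; first by move=> w; rewrite !inE iterE => /negbTE ->.
exists w2; move: hw2; rewrite !inE iterE => /andP [/negbTE -> ->].
by rewrite eq_sym oner_eq0.
Qed.
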